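(* Let $P$ be a finite poset with labeling $\omega:P\to\{1,\dots,p\}$ such that $P$ is $\omega$-consistent with rank function $\rho$, and such that $\omega(x)<\omega(y)$ whenever $\rho(x)<\rho(y)$. Then the Jordan–Hölder set of $(P,\omega)$ is uniquely decomposed as the disjoint union $$\mathcal{L}(P,\omega)=\bigsqcup_{Q}\mathcal{L}(Q,\omega),$$ where the union is over all saturated $\omega$-consistent posets $Q$ that extend $P$ and have the same rank function $\rho$ as $(P,\omega)$.
   Context: Write $x\prec y$ if $y$ covers $x$, $E(P)$ the set of covering pairs. A labeling $\omega$ induces $\epsilon:E(P)\to\{-1,1\}$, $\epsilon(x,y)=1$ if $\omega(x)<\omega(y)$ and $-1$ otherwise. $P$ is $\omega$-consistent if each principal ideal $\Lambda_z=\{w\le z\}$ has the property that $\sum\epsilon(x_{i-1},x_i)$ is the same over all its maximal chains $x_0\prec\cdots\prec x_n$; this common value is $\rho(z)$ (the rank function). The Jordan–Hölder set $\mathcal{L}(P,\omega)$ is the set of permutations $\omega(x_1)\omega(x_2)\cdots\omega(x_p)$ with $x_1,\dots,x_p$ a linear extension of $P$. A poset $Q$ on the same underlying set extends $P$ if $x<_Q y$ whenever $x<_P y$. An $\omega$-consistent poset $Q$ is saturated if any $x,y$ with $|\rho_Q(x)-\rho_Q(y)|=1$ are comparable in $Q$. *)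

(* Defs.v *)
From mathcomp Require Import all_boot all_order all_algebra.
Set Implicit Arguments. Unset Strict Implicit. Unset Printing Implicit Defensive.
Import GRing.Theory Num.Theory.

Section Posets.
Variable T : finType.

Definition is_poset (le : rel T) : Prop :=
  [/\ reflexive le, antisymmetric le & transitive le].

Definition plt (le : rel T) (x y : T) : bool := (x != y) && le x y.

Definition covers (le : rel T) (x y : T) : bool :=
  plt le x y && [forall z, ~~ (plt le x z && plt le z y)].

Definition minimal (le : rel T) (x : T) : bool := [forall w, ~~ plt le w x].

Definition comparable (le : rel T) (x y : T) : bool := le x y || le y x.

Definition is_labeling (omega : T -> nat) : Prop :=
  injective omega /\ (forall x, 1 <= omega x <= #|T|)%N.

Definition eps (omega : T -> nat) (x y : T) : int :=
  if (omega x < omega y)%N then 1%R else (-1)%R.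

(* A maximal chain x0 < x1 < ... < xn = z of the principal ideal Lambda_z,
   encoded as x0 :: s: x0 is minimal, consecutive elements are covering pairs,
   and the chain ends at z. *)
Definition maxchain (le : rel T) (z x0 : T) (s : seq T) : bool :=
  [&& minimal le x0, path (covers le) x0 s & last x0 s == z].

Definition chain_sum (omega : T -> nat) (x0 : T) (s : seq T) : int :=
  (\sum_(e <- pairmap (eps omega) x0 s) e)%R.

Definition is_rank (le : rel T) (omega : T -> nat) (rho : T -> int) : Prop :=
  forall z x0 s, maxchain le z x0 s -> chain_sum omega x0 s = rho z.

Definition omega_consistent (le : rel T) (omega : T -> nat) : Prop :=
  exists rho, is_rank le omega rho.

Definition extends (P Q : rel T) : Prop :=
  forall x y, plt P x y -> plt Q x y.

Definition saturated (Q : rel T) (rho : T -> int) : Prop :=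
  forall x y, `|(rho x - rho y)%R|%N = 1%N -> comparable Q x y.

Definition linext (le : rel T) (s : seq T) : Prop :=
  perm_eq s (enum T) /\ forall x y, plt le x y -> (index x s < index y s)%N.

Definition JH (le : rel T) (omega : T -> nat) (w : seq nat) : Prop :=
  exists s, linext le s /\ w = map omega s.

End Posets.

(* Main.v *)
Require Import Defs.
From mathcomp Require Import all_boot all_order all_algebra.
From mathcomp Require Import zify.
Import GRing.Theory Num.Theory.
Set Implicit Arguments. Unset Strict Implicit. Unset Printing Implicit Defensive.

Section Aux.
Variable T : finType.
Implicit Types (le : rel T).

Definition below le (z : T) := #|[set u | plt le u z]|.

Lemma plt_trans le : is_poset le -> forall x y z, plt le x y -> plt le y z -> plt le x z.
Proof.
case=> _ anti tr x y z /andP[nxy lxy] /andP[nyz lyz].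
apply/andP; split; last exact: tr lxy lyz.
apply/eqP=> exz; subst z.
by move/eqP: nxy; apply; apply: anti; rewrite lxy lyz.
Qed.

Lemma plt_irr le x : plt le x x = false.
Proof. by rewrite /plt eqxx. Qed.

Lemma below_lt le : is_poset le -> forall w z, plt le w z -> below le w < below le z.
Proof.
move=> po w z wz; apply: proper_card; apply/properP; split.
  apply/subsetP=> u; rewrite !inE => uw; exact: plt_trans uw wz.
by exists w; rewrite !inE ?plt_irr.
Qed.

Lemma cover_below le : is_poset le -> forall x y, plt le x y ->
  exists w, le x w && covers le w y.
Proof.
move=> po x y xy.
pose Pw := [pred w | plt le w y && le x w].
have Px : Pw x by rewrite /= xy; case: po => r _ _; rewrite r.
case: (arg_maxnP (below le) Px) => w /andP[wy xw] Hmax.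
exists w; rewrite xw /covers wy /=.
apply/forallP=> z; apply/negP=> /andP[wz zy].
have : Pw z by rewrite /= zy; case: po => _ _ tr; apply: tr xw _; case/andP: wz.
move/Hmax => /= H; move: (below_lt po wz); rewrite ltnNge; by rewrite H.
Qed.

Lemma maxchain_exists le : is_poset le -> forall x, exists x0 l, maxchain le x x0 l.
Proof.
move=> po x; move: {2}(below le x) (leqnn (below le x)) => n.
elim: n x => [|n IH] x hx.
  exists x; exists [::]; rewrite /maxchain /= eqxx andbT.
  apply/forallP=> w; apply/negP=> wx.
  by move: (below_lt po wx); rewrite ltnNge (leq_trans hx).
case: (boolP (minimal le x)) => mx.
  by exists x; exists [::]; rewrite /maxchain /= eqxx mx.
have [w wx] : exists w, plt le w x.
  move/forallPn: mx => [w]; rewrite negbK => wx; by exists w.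
case: (cover_below po wx) => v /andP[_ cvx].
have vx : plt le v x by case/andP: cvx.
have [x0 [l /and3P[m0 pl ll]]] := IH v (leq_trans (below_lt po vx) hx).
exists x0; exists (rcons l x); rewrite /maxchain m0 rcons_path pl last_rcons eqxx /=.
by rewrite (eqP ll) andbT.
Qed.

Lemma chain_sum_rcons (omega : T -> nat) x0 l y :
  chain_sum omega x0 (rcons l y) = (chain_sum omega x0 l + eps omega (last x0 l) y)%R.
Proof.
rewrite /chain_sum; elim: l x0 => [|a l IH] x0 /=.
  by rewrite !big_cons !big_nil addr0 add0r.
by rewrite !big_cons IH addrA.
Qed.

Lemma cover_rank le omega rho : is_poset le -> is_rank le omega rho ->
  forall x y, covers le x y -> rho y = (rho x + eps omega x y)%R.
Proof.
move=> po rk x y cxy.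
have [x0 [l mc]] := maxchain_exists po x.
have := rk _ _ _ mc; case/and3P: mc => m0 pl /eqP ll.
have mc' : maxchain le y x0 (rcons l y).
  by rewrite /maxchain m0 rcons_path pl ll cxy last_rcons eqxx.
have := rk _ _ _ mc'; rewrite chain_sum_rcons ll => <- ->. done.
Qed.

Lemma eps_abs omega x y : `|@eps T omega x y|%N = 1%N.
Proof. by rewrite /eps; case: ifP. Qed.

Lemma connect_covers le : is_poset le -> forall x y, le x y -> connect (covers le) x y.
Proof.
move=> po x y; move: {2}(below le y) (leqnn (below le y)) => n.
elim: n y => [|n IH] y hy lxy.
  case: (eqVneq x y) => [->|nxy]; first exact: connect0.
  have xy : plt le x y by rewrite /plt nxy lxy.
  by move: (below_lt po xy); rewrite ltnNge (leq_trans hy).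
case: (eqVneq x y) => [->|nxy]; first exact: connect0.
have xy : plt le x y by rewrite /plt nxy lxy.
case: (cover_below po xy) => w /andP[xw cwy].
have wy : plt le w y by case/andP: cwy.
apply: connect_trans (IH w (leq_trans (below_lt po wy) hy) xw) (connect1 cwy).
Qed.

Lemma rank_min le omega rho : is_rank le omega rho -> forall x, minimal le x -> rho x = 0%R.
Proof.
move=> rk x mx; have : maxchain le x x [::] by rewrite /maxchain mx /= eqxx.
by move/rk; rewrite /chain_sum /= big_nil.
Qed.

End Aux.

Section Main.
Variable T : finType.
Variables (omega : T -> nat) (rho : T -> int) (s : seq T).

Definition R0 : rel T := fun x y =>
  (index x s < index y s) && (`|(rho x - rho y)%R|%N == 1%N).

Lemma conn_idx x y : connect R0 x y -> x = y \/ index x s < index y s.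
Proof.
case/connectP=> p; elim: p x => [|a p IH] x /=; first by left.
case/andP=> /andP[xa _] pa ly.
case: (IH a pa ly) => [<-|]; right => //; exact: ltn_trans xa _.
Qed.

Lemma conn_plt x y : plt (connect R0) x y -> index x s < index y s.
Proof. by case/andP=> nxy /conn_idx [exy|//]; rewrite exy eqxx in nxy. Qed.

Lemma conn_poset : is_poset (connect R0).
Proof.
split; [exact: connect0 | | exact: connect_trans].
move=> x y /andP[/conn_idx[//|h1] /conn_idx[//|h2]].
by move: (ltn_trans h1 h2); rewrite ltnn.
Qed.

Lemma cover_conn x y : covers (connect R0) x y -> R0 x y.
Proof.
case/andP=> /andP[nxy /connectP[p]]; case: p => [|a p] /=.
  by move=> _ exy; rewrite exy eqxx in nxy.
case/andP=> xa pa ly /forallP H.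
case: (eqVneq a y) => [<-//|nay].
have := H a; rewrite /plt nay (connect1 xa).
have -> : connect R0 a y by apply/connectP; exists p.
have -> : x != a by apply/eqP=> exa; subst a; move: xa; rewrite /R0 ltnn.
done.
Qed.

Lemma Qchar (Q : rel T) : is_poset Q -> is_rank Q omega rho -> saturated Q rho ->
  linext Q s -> Q =2 connect R0.
Proof.
move=> po rk sat [_ lin] x y; apply/idP/idP.
  have sub : subrel (covers Q) (connect R0).
    move=> u v cuv; apply: connect1.
    rewrite /R0 (lin _ _ (proj1 (andP cuv))) /=.
    by rewrite (cover_rank po rk cuv) -abszN opprB addrC addKr eps_abs.
  by move/(connect_covers po); apply: (connect_sub sub).
have sub : subrel R0 Q; last first.
  have sub' : subrel R0 (connect Q) by move=> u v /sub; apply: connect1.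
  move/(connect_sub sub'); case: po => r _ tr.
  by case/connectP=> p; elim: p x => [|a p IH] x /= ; [move=> _ ->; apply: r|
     case/andP=> xa pa ly; apply: tr xa (IH _ pa ly)].
move=> {x y} x y /andP[ixy /eqP d].
case: (sat x y d) => /orP[//|Qyx].
case: (eqVneq x y) => [exy|nxy]; first by subst y; rewrite subrr in d.
have : plt Q y x by rewrite /plt eq_sym nxy.
by move/lin; rewrite ltnNge (ltnW ixy).
Qed.

Hypothesis Hs : perm_eq s (enum T).

Lemma idx_inj x y : index x s = index y s -> x = y.
Proof.
move=> e; have xs : x \in s by rewrite (perm_mem Hs) mem_enum.
have ys : y \in s by rewrite (perm_mem Hs) mem_enum.
by rewrite -(nth_index x xs) e nth_index.
Qed.

Lemma eps_R0 (hom : forall x y, (rho x < rho y)%R -> omega x < omega y) x y :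
  `|(rho x - rho y)%R|%N = 1%N -> eps omega x y = (rho y - rho x)%R.
Proof.
move=> d.
have [e|e] : (rho y = rho x + 1 \/ rho y = rho x - 1)%R by lia.
  have : (rho x < rho y)%R by rewrite e ltrDl.
  by move/hom; rewrite /eps => ->; rewrite e addrC addKr.
have : (rho y < rho x)%R by rewrite e gtrDl oppr_lt0.
move/hom => h; rewrite /eps ltnNge (ltnW h) /= e; lia.
Qed.

Lemma Qadm (P : rel T) : is_poset P -> is_rank P omega rho ->
  (forall x y, (rho x < rho y)%R -> omega x < omega y) -> linext P s ->
  [/\ is_poset (connect R0), extends P (connect R0), is_rank (connect R0) omega rho
   & saturated (connect R0) rho] /\ linext (connect R0) s.
Proof.
move=> po rk hom [_ lin].
have ext : extends P (connect R0).
  move=> x y pxy; rewrite /plt (proj1 (andP pxy)) /=.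
  have sub : subrel (covers P) (connect R0).
    move=> u v cuv; apply: connect1.
    rewrite /R0 (lin _ _ (proj1 (andP cuv))) /=.
    by rewrite (cover_rank po rk cuv) -abszN opprB addrC addKr eps_abs.
  exact: (connect_sub sub) (connect_covers po (proj2 (andP pxy))).
split; last by split=> // x y /conn_plt.
split=> //; first exact: conn_poset.
  move=> z x0 l /and3P[m0 pl /eqP lz].
  have h0 : rho x0 = 0%R.
    apply: (rank_min rk); apply/forallP=> w; apply/negP=> /ext.
    by move/forallP: m0 => /(_ w) /negP.
  have key : forall x l', path (covers (connect R0)) x l' ->
      chain_sum omega x l' = (rho (last x l') - rho x)%R.
    move=> {pl lz} x l'; elim: l' x => [|a k IH] x /=.
      by rewrite /chain_sum big_nil subrr.
    case/andP=> /cover_conn /andP[_ /eqP d] pa.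
    rewrite /chain_sum big_cons -/(chain_sum _ _ _) IH // (eps_R0 hom d).
    lia.
  by rewrite (key _ _ pl) lz h0 subr0.
move=> x y d.
have nxy : x != y by apply/eqP=> exy; subst y; rewrite subrr in d.
rewrite /comparable; case: (ltngtP (index x s) (index y s)) => h.
- by apply/orP; left; apply: connect1; rewrite /R0 h d.
- by apply/orP; right; apply: connect1; rewrite /R0 h -abszN opprB d.
- by move/idx_inj: h => exy; rewrite exy eqxx in nxy.
Qed.

End Main.

Theorem theorem3p2 (T : finType) (P : rel T) (omega : T -> nat) (rho : T -> int) :
  is_poset P -> is_labeling omega ->
  is_rank P omega rho ->
  (forall x y, (rho x < rho y)%R -> (omega x < omega y)%N) ->
  let admissible (Q : rel T) : Prop :=
    [/\ is_poset Q, extends P Q, is_rank Q omega rho & saturated Q rho] in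
  (forall w, JH P omega w <-> exists Q, admissible Q /\ JH Q omega w) /\
  (forall Q1 Q2 w, admissible Q1 -> admissible Q2 ->
     JH Q1 omega w -> JH Q2 omega w -> Q1 =2 Q2).
Proof.
move=> po [inj _] rk hom adm; split.
  move=> w; split.
    case=> s [ls ->]; have [ad ls'] := Qadm (proj1 ls) po rk hom ls.
    by exists (connect (R0 rho s)); split=> //; exists s.
  case=> Q [[_ ext _ _] [s [[ps lin] ->]]]; exists s; split=> //; split=> //.
  by move=> x y /ext /lin.
move=> Q1 Q2 w [p1 _ r1 s1] [p2 _ r2 s2] [t1 [l1 e1]] [t2 [l2 e2]].
have et : t1 = t2 by apply: (inj_map inj); rewrite -e1 -e2.
subst t2.
move=> x y; exact: etrans (Qchar p1 r1 s1 l1 x y) (esym (Qchar p2 r2 s2 l2 x y)).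
Qed.
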